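(* Let $\theta>0$ and $h>0$, and let $\mu=\frac12(\delta_{-1}+\delta_{+1})$ on $\{-1,+1\}$. For a function $q:[0,2\pi)\times\{-1,+1\}\to\mathbb{R}$ define $r_q\ge 0$ and $\Psi_q\in[0,2\pi)$ by \[ r_q e^{i\Psi_q}=\int_{\{-1,+1\}}\int_0^{2\pi} e^{ix}\,q(x,\eta)\,dx\,\mu(d\eta), \] and the operator $L_q$ acting on $f:[0,2\pi)\times\{-1,+1\}\to\mathbb{R}$ by \[ L_q f(x,\eta)=\frac12\frac{\partial^2 f}{\partial x^2}(x,\eta)-\frac{\partial}{\partial x}\Big\{\big[\theta r_q\sin(\Psi_q-x)-h\eta\sin x\big]f(x,\eta)\Big\}. \] Let $q:[0,2\pi)\times\{-1,+1\}\to\mathbb{R}$ be such that $q(x,\cdot)$ is measurable and $q(\cdot,\eta)$ is a probability density on $[0,2\pi)$ (the circle, with periodic boundary conditions). Then $q$ is a stationary solution of the McKean–Vlasov equation $\partial_t q_t=L_{q_t}q_t$, i.e. $L_q q\equiv 0$, if and only if it is of the form \[ q(x,\eta)=[Z(\eta)]^{-1}\exp\{2\theta r\cos(\Psi-x)+2h\eta\cos x\}, \] where $Z(\eta)$ is a normalizing factor and $(r,\Psi)$ satisfies the self-consistency relation \[ r e^{i\Psi}=\int_{\{-1,+1\}}\int_0^{2\pi}e^{ix}\,q(x,\eta)\,dx\,\mu(d\eta). \]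
   Context: The torus $[0,2\pi)$ is identified with the circle; functions on it are $2\pi$-periodic. $\mu$ is the law of the dichotomic random field $\eta$, uniform on $\{-1,+1\}$; $\theta>0$ is the coupling strength and $h>0$ the field intensity. *)

(* Defs.v *)
From Stdlib Require Import Reals.
From Coquelicot Require Import Coquelicot.
Open Scope R_scope.

(* The spin eta ranges over {-1,+1}; a function on [0,2pi) x {-1,+1}
   is represented as q : R -> R -> R, 2pi-periodic in its first argument,
   only the values at eta = -1, +1 being relevant. *)
Definition spin (eta : R) : Prop := eta = 1 \/ eta = -1.

Definition mu_int (g : R -> R) : R := (g 1 + g (-1)) / 2.

(* Real and imaginary parts of  \int\int e^{ix} q(x,eta) dx mu(deta). *)
Definition ord_re (q : R -> R -> R) : R :=
  mu_int (fun eta => RInt (fun x => cos x * q x eta) 0 (2 * PI)).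
Definition ord_im (q : R -> R -> R) : R :=
  mu_int (fun eta => RInt (fun x => sin x * q x eta) 0 (2 * PI)).

Definition is_polar (r Psi a b : R) : Prop :=
  0 <= r /\ 0 <= Psi < 2 * PI /\ r * cos Psi = a /\ r * sin Psi = b.

Definition L_op (theta h rq Psiq : R) (f : R -> R -> R) (x eta : R) : R :=
  / 2 * Derive_n (fun y => f y eta) 2 x
  - Derive (fun y => (theta * rq * sin (Psiq - y) - h * eta * sin y) * f y eta) x.

Definition gibbs (theta h r Psi x eta : R) : R :=
  exp (2 * theta * r * cos (Psi - x) + 2 * h * eta * cos x).

Definition Zn (theta h r Psi eta : R) : R :=
  RInt (fun x => gibbs theta h r Psi x eta) 0 (2 * PI).

Definition circle_density (q : R -> R -> R) : Prop :=
  forall eta, spin eta ->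
    (forall x, q (x + 2 * PI) eta = q x eta) /\
    (forall x, 0 <= q x eta) /\
    ex_RInt (fun x => q x eta) 0 (2 * PI) /\
    RInt (fun x => q x eta) 0 (2 * PI) = 1.

Definition twice_diff (q : R -> R -> R) : Prop :=
  forall eta, spin eta -> forall x,
    ex_derive (fun y => q y eta) x /\ ex_derive (Derive (fun y => q y eta)) x.

(* Main.v *)
Require Import Defs.
From Stdlib Require Import Reals Lra.
From Coquelicot Require Import Coquelicot.
Open Scope R_scope.

Lemma deriv0_const (F : R -> R) : (forall x, is_derive F x 0) -> forall x, F x = F 0.
Proof.
  intros HF x.
  assert (H := is_RInt_derive F (fun _ => 0) 0 x (fun y _ => HF y) (fun y _ => continuous_const 0 y)).
  apply is_RInt_unique in H.
  rewrite RInt_const in H. unfold scal, minus, plus, opp in H; simpl in H.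
  unfold mult in H; simpl in H. lra.
Qed.

Lemma ode_core (f G b : R -> R) (T : R) :
  0 < T ->
  (forall y, ex_derive f y) -> (forall y, ex_derive (Derive f) y) ->
  (forall y, is_derive G y (2 * b y)) -> (forall y, ex_derive b y) ->
  (forall x, / 2 * Derive (Derive f) x - Derive (fun y => b y * f y) x = 0) ->
  f T = f 0 -> G T = G 0 ->
  forall x, f x = f 0 * exp (- G 0) * exp (G x).
Proof.
  intros HT Hf Hdf HG Hb HL HfT HGT.
  set (F := fun y => / 2 * Derive f y - b y * f y).
  assert (HF : forall x, is_derive F x 0).
  { intros x. rewrite <- (HL x).
    apply (is_derive_minus (fun y => /2 * Derive f y) (fun y => b y * f y)).
    - apply is_derive_scal. apply Derive_correct, Hdf.
    - apply Derive_correct. apply ex_derive_mult; auto. }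
  assert (HC := deriv0_const F HF).
  set (C := F 0) in HC.
  set (H := fun y => f y * exp (- G y)).
  assert (Dexp : forall y, is_derive (fun y => exp (- G y)) y ((- (2 * b y)) * exp (- G y))).
  { intros y. assert (Dg : is_derive (fun y => - G y) y (- (2 * b y))).
    { exact (@is_derive_opp R_AbsRing R_NormedModule G y _ (HG y)). }
    exact (is_derive_comp exp (fun y => - G y) y _ _ (is_derive_exp _) Dg). }
  assert (Cexp : forall y, continuous (fun y => exp (- G y)) y).
  { intros y. apply (@ex_derive_continuous R_AbsRing R_NormedModule). eexists; apply Dexp. }
  assert (HH : forall y, is_derive H y (2 * C * exp (- G y))).
  { intros y.
    assert (D : is_derive H y (Derive f y * exp (- G y) + f y * ((- (2 * b y)) * exp (- G y)))).
    { apply (is_derive_mult f (fun y => exp (- G y))).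
      - apply Derive_correct, Hf.
      - apply Dexp.
      - intros; apply Rmult_comm. }
    replace (2 * C * exp (- G y)) with
      (Derive f y * exp (- G y) + f y * ((- (2 * b y)) * exp (- G y))); [exact D|].
    rewrite <- (HC y). unfold F. field. }
  assert (Hcont : forall y, continuous (fun y => 2 * C * exp (- G y)) y).
  { intros y. apply (@ex_derive_continuous R_AbsRing R_NormedModule). eexists.
    apply (is_derive_scal (fun y => exp (- G y))). apply Dexp. }
  assert (HI := is_RInt_derive H (fun y => 2 * C * exp (- G y)) 0 T (fun y _ => HH y) (fun y _ => Hcont y)).
  apply is_RInt_unique in HI.
  assert (HI0 : RInt (fun y => 2 * C * exp (- G y)) 0 T = 0).
  { rewrite HI. unfold H, minus, plus, opp; simpl. rewrite HfT, HGT. ring. }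
  assert (Hpos : 0 < RInt (fun y => exp (- G y)) 0 T).
  { apply RInt_gt_0; auto. intros; apply exp_pos. }

  assert (HC0 : C = 0).
  { assert (E : RInt (fun y => 2 * C * exp (- G y)) 0 T = 2 * C * RInt (fun y => exp (- G y)) 0 T).
    { apply (RInt_scal (fun y => exp (- G y)) 0 T (2 * C)).
      apply ex_RInt_continuous. intros y _. apply Cexp. }
    rewrite E in HI0. nra. }
  assert (HH0 : forall y, is_derive H y 0).
  { intros y. replace 0 with (2 * C * exp (- G y)) by (rewrite HC0; ring). apply HH. }
  intros x. assert (E := deriv0_const H HH0 x). unfold H in E.
  rewrite <- E. rewrite Rmult_assoc, <- exp_plus. replace (- G x + G x) with 0 by ring.
  rewrite exp_0; ring.
Qed.

Theorem proposition1 (theta h : R) (q : R -> R -> R) (rq Psiq : R) :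
  0 < theta -> 0 < h ->
  circle_density q -> twice_diff q ->
  is_polar rq Psiq (ord_re q) (ord_im q) ->
  ((forall eta, spin eta -> forall x, L_op theta h rq Psiq q x eta = 0) <->
   exists r Psi : R,
     (forall eta, spin eta -> forall x,
        q x eta = / Zn theta h r Psi eta * gibbs theta h r Psi x eta) /\
     r * cos Psi = ord_re q /\ r * sin Psi = ord_im q).
Proof.
  intros Hth Hh Hden Htd [Hr [HPsi [Hre Him]]].
  split.
  - intros HL. exists rq, Psiq. split; [|split; assumption].
    intros eta Heta.
    destruct (Hden eta Heta) as [Hper [Hnn [Hex Hint]]].
    assert (Hform := ode_core (fun y => q y eta)
      (fun y => 2 * theta * rq * cos (Psiq - y) + 2 * h * eta * cos y)
      (fun y => theta * rq * sin (Psiq - y) - h * eta * sin y) (2 * PI)).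
    assert (HK : forall x, q x eta = (q 0 eta * exp (- (2 * theta * rq * cos (Psiq - 0) + 2 * h * eta * cos 0))) * gibbs theta h rq Psiq x eta).
    { intros x. unfold gibbs. apply Hform.
      - pose proof PI_RGT_0; lra.
      - intros y. apply (Htd eta Heta y).
      - intros y. apply (Htd eta Heta y).
      - intros y. auto_derive; auto. unfold Rminus; ring.
      - intros y. auto_derive; auto.
      - intros y. exact (HL eta Heta y).
      - simpl. rewrite <- (Hper 0). f_equal. ring.
      - rewrite !cos_minus, cos_2PI, sin_2PI. rewrite cos_0, sin_0. ring. }
    set (K := q 0 eta * exp (- (2 * theta * rq * cos (Psiq - 0) + 2 * h * eta * cos 0))) in HK.
    assert (HZ : K * Zn theta h rq Psiq eta = 1).
    { rewrite <- Hint. unfold Zn.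
      transitivity (RInt (fun x => scal K (gibbs theta h rq Psiq x eta)) 0 (2*PI)).
      1: { rewrite (RInt_scal (fun x => gibbs theta h rq Psiq x eta)); [reflexivity|].
      apply ex_RInt_continuous. intros z _. unfold gibbs.
        apply (@ex_derive_continuous R_AbsRing R_NormedModule). auto_derive; auto. }
      apply RInt_ext. intros x _. rewrite HK. reflexivity. }
    intros x. rewrite HK. f_equal.
    assert (Zn theta h rq Psiq eta <> 0) by (intro E; rewrite E in HZ; lra).
    transitivity (K * Zn theta h rq Psiq eta * / Zn theta h rq Psiq eta).
    { field. auto. }
    rewrite HZ; ring.
  - intros [r [Psi [Hq [Hc Hs]]]] eta Heta x.
    set (b := fun y => theta * rq * sin (Psiq - y) - h * eta * sin y).
    set (K := / Zn theta h r Psi eta).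
    assert (HD : forall y, Derive (fun y => q y eta) y = 2 * (b y * q y eta)).
    { intros y. rewrite (Derive_ext _ (fun y => K * gibbs theta h r Psi y eta)).
      2: { intros t; apply Hq; auto. }
      rewrite (Hq eta Heta y). fold K. unfold gibbs, b.
      apply is_derive_unique. auto_derive; auto.
      replace (Psi + - y) with (Psi - y) by ring.
      rewrite !sin_minus.
      replace (theta * rq * (sin Psiq * cos y - cos Psiq * sin y)) with
        (theta * ((rq * sin Psiq) * cos y - (rq * cos Psiq) * sin y)) by ring.
      replace (rq * sin Psiq) with (r * sin Psi) by lra.
      replace (rq * cos Psiq) with (r * cos Psi) by lra.
      ring. }
    unfold L_op. change (Derive_n (fun y => q y eta) 2 x) with (Derive (Derive (fun y => q y eta)) x).
    rewrite (Derive_ext (Derive (fun y => q y eta)) (fun y => 2 * (b y * q y eta)) x HD).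
    rewrite Derive_scal. unfold b. field.
Qed.
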